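(* Let $\mathbb{K}$ be an algebraically closed field of characteristic $p$, with $p=0$ or $p\ge5$, and let $(\Lambda_1,\Lambda_2,\Lambda_3)$ be a dual $3$-net of conic-line type of order $n$ in $PG(2,\mathbb{K})$, with $n<p$ if $p>0$. Then $(\Lambda_1,\Lambda_2,\Lambda_3)$ realizes a cyclic group $C_n$.
   Context: A dual $3$-net of order $n$ in $PG(2,\mathbb{K})$ is a triple $(\Lambda_1,\Lambda_2,\Lambda_3)$ of pairwise disjoint point sets, each of size $n$, such that every line meeting two distinct components meets each component in exactly one point. It realizes a group $(G,\cdot)$ if there are bijections $\alpha:G\to\Lambda_1$, $\beta:G\to\Lambda_2$, $\gamma:G\to\Lambda_3$ with $a\cdot b=c$ iff $\alpha(a),\beta(b),\gamma(c)$ are collinear. A dual $3$-net of order $n\ge4$ is of conic-line type if two of its components lie on an irreducible conic and the third lies on a line. *)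

(* Defs.v *)
From HB Require Import structures.
From mathcomp Require Import all_boot all_order all_algebra all_fingroup all_solvable.
Set Implicit Arguments. Unset Strict Implicit. Unset Printing Implicit Defensive.
Import GRing.Theory.
Local Open Scope ring_scope.

(* Homogeneous coordinates: a point (resp. line) of PG(2,K) is represented by a
   nonzero row vector of K^3, determined up to a nonzero scalar. *)

Section ProjPlane.
Variable K : fieldType.

Definition dot (l v : 'rV[K]_3) : K := \sum_(i < 3) l 0 i * v 0 i.

Definition incident (l v : 'rV[K]_3) : Prop := dot l v = 0.

Definition proportional (u v : 'rV[K]_3) : Prop :=
  exists c : K, c != 0 /\ u = c *: v.

Definition collinear (u v w : 'rV[K]_3) : Prop :=
  exists l : 'rV[K]_3, l != 0 /\ incident l u /\ incident l v /\ incident l w.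

Definition dual3net (n : nat) (L : 'I_3 -> 'I_n -> 'rV[K]_3) : Prop :=
  [/\ (forall k a, L k a != 0),
      (* points are pairwise distinct, within and across components
         (so each component has exactly n points and they are disjoint) *)
      (forall k k' a a', (k, a) != (k', a') -> ~ proportional (L k a) (L k' a')) &
      (forall l : 'rV[K]_3, l != 0 -> forall k1 k2 : 'I_3, k1 != k2 ->
         (exists a, incident l (L k1 a)) -> (exists a, incident l (L k2 a)) ->
         forall k, exists! a, incident l (L k a))].

Definition qform (A : 'M[K]_3) (v : 'rV[K]_3) : K :=
  \sum_(i < 3) \sum_(j < 3) A i j * v 0 i * v 0 j.

Definition qcoef (A : 'M[K]_3) (i j : 'I_3) : K :=
  if i == j then A i i else A i j + A j i.

Definition prodcoef (u v : 'rV[K]_3) (i j : 'I_3) : K :=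
  if i == j then u 0 i * v 0 i else u 0 i * v 0 j + u 0 j * v 0 i.

(* irreducible conic: the quadratic polynomial is nonzero and is not a product
   of two linear forms over K *)
Definition irreducible_conic (A : 'M[K]_3) : Prop :=
  (exists i j : 'I_3, (i <= j)%N /\ qcoef A i j != 0) /\
  ~ (exists u v : 'rV[K]_3,
       forall i j : 'I_3, (i <= j)%N -> qcoef A i j = prodcoef u v i j).

Definition on_conic (A : 'M[K]_3) (n : nat) (P : 'I_n -> 'rV[K]_3) : Prop :=
  forall a, qform A (P a) = 0.

Definition on_line (n : nat) (P : 'I_n -> 'rV[K]_3) : Prop :=
  exists l : 'rV[K]_3, l != 0 /\ forall a, incident l (P a).

Definition c0 : 'I_3 := @Ordinal 3 0 isT.
Definition c1 : 'I_3 := @Ordinal 3 1 isT.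
Definition c2 : 'I_3 := @Ordinal 3 2 isT.

Definition conic_line_type (n : nat) (L : 'I_3 -> 'I_n -> 'rV[K]_3) : Prop :=
  (4 <= n)%N /\
  exists i j k : 'I_3, [/\ i != j, j != k, i != k &
    (exists A : 'M[K]_3, [/\ irreducible_conic A, on_conic A (L i) & on_conic A (L j)])
    /\ on_line (L k)].

Definition realizes (n : nat) (L : 'I_3 -> 'I_n -> 'rV[K]_3)
    (gT : finGroupType) (G : {group gT}) : Prop :=
  exists alpha beta gamma : gT -> 'I_n,
    [/\ {in G &, injective alpha}, {in G &, injective beta},
        {in G &, injective gamma},
        (forall i : 'I_n, [/\ exists2 a, a \in G & alpha a = i,
                              exists2 a, a \in G & beta a = i &
                              exists2 a, a \in G & gamma a = i]) &
        {in G & G, forall a b, {in G, forall c,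
           (a * b)%g = c <-> collinear (L c0 (alpha a)) (L c1 (beta b)) (L c2 (gamma c))}}].

End ProjPlane.

(* Main.v *)
Require Import Defs.
From HB Require Import structures.
From mathcomp Require Import all_boot all_order all_algebra all_fingroup all_solvable.
From mathcomp Require Import ring.
Set Implicit Arguments. Unset Strict Implicit. Unset Printing Implicit Defensive.
Import GRing.Theory.
Local Open Scope ring_scope.
Local Notation c0 := Defs.c0.
Local Notation c1 := Defs.c1.
Local Notation c2 := Defs.c2.

Section Geo.
Variable K : fieldType.
Implicit Types u v w l : 'rV[K]_3.

Notation "v `0" := (v 0 c0) (at level 2).
Notation "v `1" := (v 0 c1) (at level 2).
Notation "v `2" := (v 0 c2) (at level 2).

Lemma ord3E (i : 'I_3) : i = c0 \/ i = c1 \/ i = c2.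
Proof.
case: i => [[|[|[|m]]] Hm].
- by left; apply: val_inj.
- by right; left; apply: val_inj.
- by right; right; apply: val_inj.
- by [].
Qed.

Lemma sum3 (F : 'I_3 -> K) : \sum_(i < 3) F i = F c0 + F c1 + F c2.
Proof.
rewrite !big_ord_recr big_ord0 /= add0r.
have -> : (widen_ord (leqnSn 2) (widen_ord (leqnSn 1) ord_max)) = c0 by apply: val_inj.
have -> : (widen_ord (leqnSn 2) ord_max) = c1 by apply: val_inj.
have -> : (@ord_max 2) = c2 by apply: val_inj.
by [].
Qed.

Lemma dotE l v : dot l v = l`0 * v`0 + l`1 * v`1 + l`2 * v`2.
Proof. by rewrite /dot sum3. Qed.

Lemma qformE (A : 'M[K]_3) v : qform A v =
  A c0 c0 * v`0 * v`0 + A c0 c1 * v`0 * v`1 + A c0 c2 * v`0 * v`2 +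
  A c1 c0 * v`1 * v`0 + A c1 c1 * v`1 * v`1 + A c1 c2 * v`1 * v`2 +
  A c2 c0 * v`2 * v`0 + A c2 c1 * v`2 * v`1 + A c2 c2 * v`2 * v`2.
Proof. by rewrite /qform sum3 !sum3; ring. Qed.

Definition mk3 (x y z : K) : 'rV[K]_3 :=
  \row_(i < 3) (if i == c0 then x else if i == c1 then y else z).

Lemma mk3E0 x y z : (mk3 x y z)`0 = x. Proof. by rewrite mxE. Qed.
Lemma mk3E1 x y z : (mk3 x y z)`1 = y. Proof. by rewrite mxE. Qed.
Lemma mk3E2 x y z : (mk3 x y z)`2 = z. Proof. by rewrite mxE. Qed.

Lemma vec3P u v : u`0 = v`0 -> u`1 = v`1 -> u`2 = v`2 -> u = v.
Proof.
move=> h0 h1 h2; apply/rowP => i.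
by case: (ord3E i) => [->|[->|->]].
Qed.

Lemma vec0E : (0 : 'rV[K]_3)`0 = 0 /\ (0 : 'rV[K]_3)`1 = 0 /\ (0 : 'rV[K]_3)`2 = 0.
Proof. by rewrite !mxE. Qed.

Lemma vec3_neq0 v : v != 0 -> v`0 != 0 \/ v`1 != 0 \/ v`2 != 0.
Proof.
move=> hv; case: (eqVneq v`0 0) => h0; last by left.
case: (eqVneq v`1 0) => h1; last by right; left.
case: (eqVneq v`2 0) => h2; last by right; right.
by case/negP: hv; apply/eqP; apply: vec3P; rewrite !mxE.
Qed.

Lemma vec3_0 v : v`0 = 0 -> v`1 = 0 -> v`2 = 0 -> v = 0.
Proof. by move=> *; apply: vec3P; rewrite !mxE. Qed.

Definition cross u v := mk3 (u`1*v`2 - u`2*v`1) (u`2*v`0 - u`0*v`2) (u`0*v`1 - u`1*v`0).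
Definition triple u v w := dot (cross u v) w.

Lemma tripleE u v w : triple u v w =
  (u`1*v`2 - u`2*v`1) * w`0 + (u`2*v`0 - u`0*v`2) * w`1 + (u`0*v`1 - u`1*v`0) * w`2.
Proof. by rewrite /triple dotE /cross mk3E0 mk3E1 mk3E2. Qed.

Lemma mulf0l (x y : K) : y != 0 -> x * y = 0 -> x = 0.
Proof. by move=> hy /eqP; rewrite mulf_eq0 (negbTE hy) orbF => /eqP. Qed.

Lemma sub0eq (x y : K) : x - y = 0 -> x = y.
Proof. by move/eqP; rewrite subr_eq0 => /eqP. Qed.

Lemma cross0_prop u v : u != 0 -> v != 0 -> cross u v = 0 -> proportional u v.
Proof.
move=> hu hv hc.
have e0 : u`1*v`2 - u`2*v`1 = 0.
  by have := congr1 (fun w : 'rV[K]_3 => w 0 c0) hc; rewrite /cross /= mk3E0 mxE.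
have e1 : u`2*v`0 - u`0*v`2 = 0.
  by have := congr1 (fun w : 'rV[K]_3 => w 0 c1) hc; rewrite /cross /= mk3E1 mxE.
have e2 : u`0*v`1 - u`1*v`0 = 0.
  by have := congr1 (fun w : 'rV[K]_3 => w 0 c2) hc; rewrite /cross /= mk3E2 mxE.
have E : forall j k : 'I_3, u 0 j * v 0 k = u 0 k * v 0 j.
  move=> j k; case: (ord3E j) => [->|[->|->]]; case: (ord3E k) => [->|[->|->]];
  rewrite ?(sub0eq e0) ?(sub0eq e1) ?(sub0eq e2) //;
  by [rewrite mulrC| rewrite -(sub0eq e0) | rewrite -(sub0eq e1) | rewrite -(sub0eq e2)].
have key : forall k : 'I_3, v 0 k != 0 -> proportional u v.
  move=> k hk; have uk : u 0 k != 0.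
    apply/negP => /eqP uk; case/negP: hu; apply/eqP.
    by apply: vec3_0; apply: (mulf0l hk); rewrite E uk mul0r.
  exists (u 0 k / v 0 k); split; first by rewrite mulf_eq0 invr_eq0 negb_or uk hk.
  apply/rowP => j; rewrite !mxE; apply: (mulIf hk).
  by rewrite E; field.
case: (vec3_neq0 hv) => [h|[h|h]]; exact: key h.
Qed.


Lemma cross_dot1 u v : dot (cross u v) u = 0.
Proof. rewrite dotE /cross !mxE /=; ring. Qed.
Lemma cross_dot2 u v : dot (cross u v) v = 0.
Proof. rewrite dotE /cross !mxE /=; ring. Qed.

Lemma collinear_triple u v w : cross u v != 0 ->
  (collinear u v w <-> triple u v w = 0).
Proof.
move=> huv; split.
  case=> l [hl [hu [hv hw]]].
  move: hu hv hw; rewrite /incident => hu hv hw.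
  have id : forall k : 'I_3, triple u v w * l 0 k =
     dot l u * (cross v w) 0 k + dot l v * (cross w u) 0 k + dot l w * (cross u v) 0 k.
    move=> k; rewrite tripleE !dotE /cross.
    by case: (ord3E k) => [->|[->|->]]; rewrite !mxE /=; ring.
  case: (vec3_neq0 hl) => [h|[h|h]]; apply: (mulf0l h); by rewrite id hu hv hw; ring.
move=> ht; exists (cross u v); split => //; split; first exact: cross_dot1.
by split; [exact: cross_dot2|].
Qed.

Lemma not_prop_cross u v : u != 0 -> v != 0 -> ~ proportional u v -> cross u v != 0.
Proof. by move=> hu hv hp; apply/negP => /eqP h; apply: hp; apply: cross0_prop. Qed.


Lemma col_triple u v w : collinear u v w -> triple u v w = 0.
Proof.
case=> l [hl [hu [hv hw]]].
move: hu hv hw; rewrite /incident => hu hv hw.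
have id : forall k : 'I_3, triple u v w * l 0 k =
   dot l u * (cross v w) 0 k + dot l v * (cross w u) 0 k + dot l w * (cross u v) 0 k.
  move=> k; rewrite tripleE !dotE /cross.
  by case: (ord3E k) => [->|[->|->]]; rewrite !mxE /=; ring.
case: (vec3_neq0 hl) => [h|[h|h]]; apply: (mulf0l h); by rewrite id hu hv hw; ring.
Qed.

Lemma triple_cyc u v w : triple u v w = triple v w u.
Proof. by rewrite !tripleE; ring. Qed.
Lemma triple_swap u v w : triple v u w = - triple u v w.
Proof. by rewrite !tripleE; ring. Qed.
Lemma col12 u v w : collinear u v w -> collinear v u w.
Proof. by case=> l [hl [hu [hv hw]]]; exists l. Qed.
Lemma col23 u v w : collinear u v w -> collinear u w v.
Proof. by case=> l [hl [hu [hv hw]]]; exists l. Qed.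

Definition noFact (A : 'M[K]_3) :=
  ~ exists u w : 'rV[K]_3, forall v, qform A v = dot u v * dot w v.

Ltac mk3s := rewrite ?mk3E0 ?mk3E1 ?mk3E2.

Lemma irr_noFact A : irreducible_conic A -> noFact A.
Proof.
case=> _ hirr [u [w H]]; apply: hirr; exists u, w => i j hij.
case: (ord3E i) hij => [->|[->|->]]; case: (ord3E j) => [->|[->|->]] //= _;
  rewrite /qcoef /prodcoef /=.
- transitivity (qform A (mk3 1 0 0)); first by rewrite qformE; mk3s; ring.
  by rewrite H !dotE; mk3s; ring.
- transitivity (qform A (mk3 1 1 0) - qform A (mk3 1 0 0) - qform A (mk3 0 1 0)); first by rewrite !qformE; mk3s; ring.
  by rewrite !H !dotE; mk3s; ring.
- transitivity (qform A (mk3 1 0 1) - qform A (mk3 1 0 0) - qform A (mk3 0 0 1)); first by rewrite !qformE; mk3s; ring.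
  by rewrite !H !dotE; mk3s; ring.
- transitivity (qform A (mk3 0 1 0)); first by rewrite qformE; mk3s; ring.
  by rewrite H !dotE; mk3s; ring.
- transitivity (qform A (mk3 0 1 1) - qform A (mk3 0 1 0) - qform A (mk3 0 0 1)); first by rewrite !qformE; mk3s; ring.
  by rewrite !H !dotE; mk3s; ring.
- transitivity (qform A (mk3 0 0 1)); first by rewrite qformE; mk3s; ring.
  by rewrite H !dotE; mk3s; ring.
Qed.

Definition Bq (A : 'M[K]_3) u v := qform A (u + v) - qform A u - qform A v.

Section Basis.
Variables (E1 E2 E3 : 'rV[K]_3).
Definition comb (x y z : K) := x *: E1 + y *: E2 + z *: E3.

Lemma comb0 x y z : (comb x y z)`0 = x * E1`0 + y * E2`0 + z * E3`0.
Proof. by rewrite !mxE. Qed.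
Lemma comb1 x y z : (comb x y z)`1 = x * E1`1 + y * E2`1 + z * E3`1.
Proof. by rewrite !mxE. Qed.
Lemma comb2 x y z : (comb x y z)`2 = x * E1`2 + y * E2`2 + z * E3`2.
Proof. by rewrite !mxE. Qed.
Ltac combs := rewrite ?comb0 ?comb1 ?comb2.

Definition det3 p1 p2 p3 q1 q2 q3 r1 r2 r3 : K :=
  p1 * (q2 * r3 - q3 * r2) - p2 * (q1 * r3 - q3 * r1) + p3 * (q1 * r2 - q2 * r1).

Lemma triple_comb p1 p2 p3 q1 q2 q3 r1 r2 r3 :
  triple (comb p1 p2 p3) (comb q1 q2 q3) (comb r1 r2 r3) =
  det3 p1 p2 p3 q1 q2 q3 r1 r2 r3 * triple E1 E2 E3.
Proof. rewrite !tripleE; combs; rewrite /det3; ring. Qed.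

Lemma qform_comb A x y z : qform A (comb x y z) =
  x^+2 * qform A E1 + y^+2 * qform A E2 + z^+2 * qform A E3 +
  x * y * Bq A E1 E2 + x * z * Bq A E1 E3 + y * z * Bq A E2 E3.
Proof. rewrite /Bq !qformE; combs; rewrite !mxE; ring. Qed.

Lemma dot_comb l x y z : dot l (comb x y z) = x * dot l E1 + y * dot l E2 + z * dot l E3.
Proof. rewrite !dotE; combs; ring. Qed.

Lemma comb_scale c x y z : comb (c * x) (c * y) (c * z) = c *: comb x y z.
Proof. by apply: vec3P; rewrite ?mxE; combs; ring. Qed.

Hypothesis hD : triple E1 E2 E3 != 0.
Definition D := triple E1 E2 E3.
Definition co1 P := triple P E2 E3 / D.
Definition co2 P := triple E1 P E3 / D.
Definition co3 P := triple E1 E2 P / D.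

Lemma combP P : P = comb (co1 P) (co2 P) (co3 P).
Proof.
rewrite /co1 /co2 /co3 /D; apply: vec3P; combs; move: hD; rewrite !tripleE => h; field => //.
Qed.

Lemma co1E P : co1 P = dot (D^-1 *: cross E2 E3) P.
Proof. by rewrite /co1 tripleE dotE /cross !mxE /=; ring. Qed.
Lemma co2E P : co2 P = dot (D^-1 *: cross E3 E1) P.
Proof. by rewrite /co2 tripleE dotE /cross !mxE /=; ring. Qed.
Lemma co3E P : co3 P = dot (D^-1 *: cross E1 E2) P.
Proof. by rewrite /co3 tripleE dotE /cross !mxE /=; ring. Qed.

Lemma red_basis A (a1 a2 a3 b1 b2 b3 : K) :
  (forall x y z, qform A (comb x y z) = (a1 * x + a2 * y + a3 * z) * (b1 * x + b2 * y + b3 * z)) ->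
  ~ noFact A.
Proof.
move=> H; apply; exists (a1 *: (D^-1 *: cross E2 E3) + a2 *: (D^-1 *: cross E3 E1) + a3 *: (D^-1 *: cross E1 E2)).
exists (b1 *: (D^-1 *: cross E2 E3) + b2 *: (D^-1 *: cross E3 E1) + b3 *: (D^-1 *: cross E1 E2)).
move=> v; rewrite {1}(combP v) H co1E co2E co3E.
by rewrite !dotE !mxE /=; ring.
Qed.

End Basis.

End Geo.

Ltac fs := repeat (apply/andP; split); try assumption.

Section Core.
Variables (K : fieldType) (n : nat) (A : 'M[K]_3) (l : 'rV[K]_3) (X Y Z : 'I_n -> 'rV[K]_3).
Hypotheses (hA : noFact A) (hXc : forall a, qform A (X a) = 0) (hYc : forall a, qform A (Y a) = 0)
  (hZl : forall c, dot l (Z c) = 0) (hXl : forall a, dot l (X a) != 0) (hYl : forall a, dot l (Y a) != 0)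
  (hZ0 : forall c, Z c != 0)
  (hXi : forall a a', proportional (X a) (X a') -> a = a')
  (hYi : forall a a', proportional (Y a) (Y a') -> a = a')
  (hZi : forall a a', proportional (Z a) (Z a') -> a = a')
  (hXY : forall a b, ~ proportional (X a) (Y b))
  (hN3 : forall b c, exists a, triple (X a) (Y b) (Z c) = 0) (b0 : 'I_n).

Lemma prop_comb (U V W : 'rV[K]_3) p3 q3 x y : p3 != 0 -> q3 != 0 ->
  proportional (comb U V W (p3 * x) (p3 * y) p3) (comb U V W (q3 * x) (q3 * y) q3).
Proof.
move=> hp hq; exists (p3 / q3); split; first by rewrite mulf_eq0 invr_eq0 negb_or hp hq.
rewrite -comb_scale; congr comb; field; exact: hq.
Qed.

Section Secant.
Variables (U V W : 'rV[K]_3).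
Hypotheses (hD : triple U V W != 0) (hQU : qform A U = 0) (hQV : qform A V = 0)
  (hlU : dot l U = 0) (hlV : dot l V = 0) (hlW : dot l W != 0).

Let b := Bq A U V.
Let e := Bq A U W.
Let g := Bq A V W.
Let k := qform A W.

Lemma sec_hQ x y z : qform A (comb U V W x y z) = x*y*b + x*z*e + y*z*g + z^+2*k.
Proof. rewrite qform_comb hQU hQV /b /e /g /k; ring. Qed.

Lemma sec_b : b != 0.
Proof.
apply/negP => /eqP hb0; apply: (@red_basis _ U V W hD A 0 0 1 e g k) hA => x y z.
rewrite sec_hQ hb0; ring.
Qed.

Let c := (e*g/b - k)/b.

Lemma sec_c : c != 0.
Proof.
have hb := sec_b.
apply/negP => /eqP hc0.
have hk : k = e*g/b.
  apply/eqP; rewrite eq_sym -subr_eq0; apply/eqP.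
  by apply: (mulf0l (y := b^-1)); rewrite ?invr_eq0 //.
apply: (@red_basis _ U V W hD A b 0 g 0 1 (e/b)) hA => x y z.
rewrite sec_hQ hk; field; exact: hb.
Qed.

Lemma sec_lP P : dot l P = co3 U V W P * dot l W.
Proof. by rewrite {1}(combP hD P) dot_comb hlU hlV; ring. Qed.

Definition sP P := co1 U V W P / co3 U V W P + g/b.

Lemma sec_param P : qform A P = 0 -> dot l P != 0 ->
  [/\ co3 U V W P != 0, sP P != 0 &
   P = comb U V W (co3 U V W P * (sP P - g/b)) (co3 U V W P * (c / sP P - e/b)) (co3 U V W P)].
Proof.
move=> hq hl.
have hb := sec_b; have hc := sec_c.
have h3 : co3 U V W P != 0 by apply: contra hl; rewrite sec_lP => /eqP ->; rewrite mul0r.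
set p1 := co1 U V W P; set p2 := co2 U V W P; set p3 := co3 U V W P.
have heq : p1 * p2 * b + p1 * p3 * e + p2 * p3 * g + p3 ^+ 2 * k = 0 by rewrite -sec_hQ /p1 /p2 /p3 -combP.
have hst : sP P * (p2/p3 + e/b) = c.
  apply: sub0eq; transitivity ((p1 * p2 * b + p1 * p3 * e + p2 * p3 * g + p3 ^+ 2 * k) / (b * p3 ^+ 2)).
    by rewrite /sP -/p1 -/p3 /c; field; fs.
  by rewrite heq mul0r.
have hs : sP P != 0 by apply: contra hc => /eqP h; rewrite -hst h mul0r.
split => //.
rewrite {1}(combP hD P) -/p1 -/p2 -/p3; congr comb.
  by rewrite /sP -/p1 -/p3; field; fs.
have -> : c / sP P = p2 / p3 + e / b by rewrite -[c in LHS]hst; field; fs.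
by field; fs.
Qed.

Lemma sec_triple p3 q3 s1 s2 r1 r2 :
  triple (comb U V W (p3 * (s1 - g/b)) (p3 * (c / s1 - e/b)) p3)
         (comb U V W (q3 * (s2 - g/b)) (q3 * (c / s2 - e/b)) q3) (comb U V W r1 r2 0) =
  p3 * q3 * triple U V W * (r1 * (c/s1 - c/s2) - r2 * (s1 - s2)).
Proof. rewrite triple_comb /det3; ring. Qed.


Lemma sec_main : exists s1 s2 s3 : 'I_n -> K,
  [/\ injective s1, injective s2, injective s3, (forall a, s1 a != 0 /\ s2 a != 0) &
   forall a b' c', triple (X a) (Y b') (Z c') = 0 -> s1 a * s2 b' = s3 c'].
Proof.
have hb := sec_b; have hc := sec_c.
have pX a := sec_param (hXc a) (hXl a).
have pY a := sec_param (hYc a) (hYl a).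
have hZ3 c' : co3 U V W (Z c') = 0.
  by apply: (mulf0l hlW); rewrite -sec_lP.
have hZr c' : Z c' = comb U V W (co1 U V W (Z c')) (co2 U V W (Z c')) 0.
  by rewrite {1}(combP hD (Z c')) hZ3.
have sXY a b' : sP (X a) != sP (Y b').
  apply/negP => /eqP hs; apply: (hXY (a := a) (b := b')).
  case: (pX a) => h1 _ ->; case: (pY b') => h2 _ ->; rewrite hs.
  exact: prop_comb.
have rel a b' c' : triple (X a) (Y b') (Z c') = 0 ->
   co1 U V W (Z c') * (c / sP (X a) - c / sP (Y b')) =
   co2 U V W (Z c') * (sP (X a) - sP (Y b')).
  move=> ht; apply: sub0eq.
  have E := sec_triple (co3 U V W (X a)) (co3 U V W (Y b')) (sP (X a)) (sP (Y b'))
     (co1 U V W (Z c')) (co2 U V W (Z c')).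
  case: (pX a) => h1 _ e1; case: (pY b') => h2 _ e2.
  rewrite -e1 -e2 -hZr ht in E.
  apply: (mulf0l (y := co3 U V W (X a) * co3 U V W (Y b') * triple U V W)).
    by apply: mulf_neq0; [apply: mulf_neq0|].
  by rewrite mulrC -E.
have hr2 c' : co2 U V W (Z c') != 0.
  have [a ha] := hN3 b0 c'.
  apply/negP => /eqP h0; move: (rel _ _ _ ha); rewrite h0 mul0r => h.
  have hd : c / sP (X a) - c / sP (Y b0) != 0.
    rewrite subr_eq0; apply: contra (sXY a b0) => /eqP h'.
    case: (pX a) => _ hs1 _; case: (pY b0) => _ hs2 _.
    apply/eqP; transitivity (c / (c / sP (X a))); first by field; fs.
    by rewrite h'; field; fs.
  have h1 := mulf0l hd h.
  by move: (hZ0 c'); rewrite hZr h1 h0 (_ : comb U V W 0 0 0 = 0) ?eqxx //; apply: vec3P; rewrite ?comb0 ?comb1 ?comb2 !mxE; ring.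
exists (fun a => sP (X a)), (fun a => sP (Y a)),
  (fun c' => - c * co1 U V W (Z c') / co2 U V W (Z c')).
split.
- move=> a a' hs; apply: hXi.
  case: (pX a) => h1 _ ->; case: (pX a') => h2 _ ->; rewrite /= in hs; rewrite hs.
  exact: prop_comb.
- move=> a a' hs; apply: hYi.
  case: (pY a) => h1 _ ->; case: (pY a') => h2 _ ->; rewrite /= in hs; rewrite hs.
  exact: prop_comb.
- move=> c1' c2' /= hs; apply: hZi.
  have h1 := hr2 c1'; have h2 := hr2 c2'.
  move: (hZr c1') (hZr c2') hs h1 h2.
  set r1 := co1 U V W (Z c1'); set r2 := co2 U V W (Z c1').
  set q1 := co1 U V W (Z c2'); set q2 := co2 U V W (Z c2').
  move=> -> -> hs h1 h2.
  exists (r2 / q2); split.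
    by rewrite mulf_neq0 ?invr_eq0.
  rewrite -comb_scale; congr comb.
  + apply: (@mulIf _ (- c / r2)).
      by rewrite mulf_neq0 ?invr_eq0 ?oppr_eq0.
    transitivity (- c * r1 / r2); first by field; fs.
    rewrite hs; field; fs.
  + field; fs.
  + by rewrite mulr0.
- by move=> a; case: (pX a) => _ -> _; case: (pY a) => _ -> _.
move=> a b' c' ht /=.
have E := rel a b' c' ht.
case: (pX a) => _ hs1 _; case: (pY b') => _ hs2 _.
have hd : sP (X a) - sP (Y b') != 0 by rewrite subr_eq0 sXY.
set s1 := sP (X a) in E hs1 hd *; set s2 := sP (Y b') in E hs2 hd *.
set r1 := co1 U V W (Z c') in E *; set r2 := co2 U V W (Z c') in E *.
have h2 : (s1 - s2) * (r2 * s1 * s2 + r1 * c) = 0.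
  transitivity (s1 * s2 * (r2 * (s1 - s2) - r1 * (c / s1 - c / s2))).
    by field; fs.
  by rewrite E subrr mulr0.
have h3 := mulf0l hd (etrans (mulrC _ _) h2).
have hr := hr2 c'.
transitivity ((r2 * s1 * s2 + r1 * c) / r2 - c * r1 / r2).
  by field; fs.
by rewrite h3 mul0r sub0r; field; fs.
Qed.

End Secant.

Section Tangent.
Variables (U V W : 'rV[K]_3).
Hypotheses (hD : triple U V W != 0) (hQU : qform A U = 0) (hBUV : Bq A U V = 0)
  (hQV : qform A V != 0)
  (hlU : dot l U = 0) (hlV : dot l V = 0) (hlW : dot l W != 0)
  (hfac : forall a h d : K, exists al be ga de : K, forall x y,
     a * x ^+ 2 + h * x * y + d * y ^+ 2 = (al * x + be * y) * (ga * x + de * y)).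

Let d := qform A V.
Let e := Bq A U W.
Let g := Bq A V W.
Let k := qform A W.

Lemma tan_hQ x y z : qform A (comb U V W x y z) = y ^+ 2 * d + x * z * e + y * z * g + z ^+ 2 * k.
Proof. rewrite qform_comb hQU hBUV /d /e /g /k; ring. Qed.

Lemma tan_e : e != 0.
Proof.
apply/negP => /eqP he0.
have [al [be [ga [de H]]]] := hfac d g k.
apply: (@red_basis _ U V W hD A 0 al be 0 ga de) hA => x y z.
rewrite tan_hQ he0; transitivity ((al * y + be * z) * (ga * y + de * z)); last by ring.
by rewrite -H; ring.
Qed.

Lemma tan_lP P : dot l P = co3 U V W P * dot l W.
Proof. by rewrite {1}(combP hD P) dot_comb hlU hlV; ring. Qed.

Definition tP P := co2 U V W P / co3 U V W P.
Definition tF t := - (d * t ^+ 2 + g * t + k) / e.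

Lemma tan_param P : qform A P = 0 -> dot l P != 0 ->
  co3 U V W P != 0 /\ P = comb U V W (co3 U V W P * tF (tP P)) (co3 U V W P * tP P) (co3 U V W P).
Proof.
move=> hq hl.
have he := tan_e.
have h3 : co3 U V W P != 0 by apply: contra hl; rewrite tan_lP => /eqP ->; rewrite mul0r.
set p1 := co1 U V W P; set p2 := co2 U V W P; set p3 := co3 U V W P.
have heq : p2 ^+ 2 * d + p1 * p3 * e + p2 * p3 * g + p3 ^+ 2 * k = 0.
  by rewrite -tan_hQ /p1 /p2 /p3 -combP.
split => //.
rewrite {1}(combP hD P) -/p1 -/p2 -/p3; congr comb; last by rewrite /tP -/p2 -/p3; field; fs.
rewrite /tF /tP -/p2 -/p3.
apply: sub0eq; transitivity ((p2 ^+ 2 * d + p1 * p3 * e + p2 * p3 * g + p3 ^+ 2 * k) / (e * p3)).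
  by field; fs.
by rewrite heq mul0r.
Qed.

Lemma tan_triple p3 q3 t1 t2 r1 r2 :
  triple (comb U V W (p3 * tF t1) (p3 * t1) p3)
         (comb U V W (q3 * tF t2) (q3 * t2) q3) (comb U V W r1 r2 0) =
  p3 * q3 * triple U V W * (r1 * (t1 - t2) - r2 * (tF t1 - tF t2)).
Proof. rewrite triple_comb /det3; ring. Qed.

Lemma tan_main : exists s1 s2 s3 : 'I_n -> K,
  [/\ injective s1, injective s2, injective s3 &
   forall a b' c', triple (X a) (Y b') (Z c') = 0 -> s1 a + s2 b' = s3 c'].
Proof.
have he := tan_e.
have hd : d != 0 by [].
have pX a := tan_param (hXc a) (hXl a).
have pY a := tan_param (hYc a) (hYl a).
have hZ3 c' : co3 U V W (Z c') = 0.
  by apply: (mulf0l hlW); rewrite -tan_lP.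
have hZr c' : Z c' = comb U V W (co1 U V W (Z c')) (co2 U V W (Z c')) 0.
  by rewrite {1}(combP hD (Z c')) hZ3.
have sXY a b' : tP (X a) != tP (Y b').
  apply/negP => /eqP hs; apply: (hXY (a := a) (b := b')).
  case: (pX a) => h1 ->; case: (pY b') => h2 ->; rewrite hs.
  exact: prop_comb.
have rel a b' c' : triple (X a) (Y b') (Z c') = 0 ->
   co1 U V W (Z c') * e + co2 U V W (Z c') * (d * (tP (X a) + tP (Y b')) + g) = 0.
  move=> ht.
  have E := tan_triple (co3 U V W (X a)) (co3 U V W (Y b')) (tP (X a)) (tP (Y b'))
     (co1 U V W (Z c')) (co2 U V W (Z c')).
  case: (pX a) => h1 e1; case: (pY b') => h2 e2.
  rewrite -e1 -e2 -hZr ht in E.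
  have hdt : tP (X a) - tP (Y b') != 0 by rewrite subr_eq0 sXY.
  apply: (mulf0l (y := co3 U V W (X a) * co3 U V W (Y b') * triple U V W * (tP (X a) - tP (Y b')) / e)).
    by rewrite mulf_neq0 ?invr_eq0 //; apply: mulf_neq0 => //; apply: mulf_neq0; [apply: mulf_neq0|].
  rewrite E /tF; field; fs.
have hr2 c' : co2 U V W (Z c') != 0.
  have [a ha] := hN3 b0 c'.
  apply/negP => /eqP h0; move: (rel _ _ _ ha); rewrite h0 mul0r addr0 => h.
  have h1 := mulf0l he h.
  by move: (hZ0 c'); rewrite hZr h1 h0 (_ : comb U V W 0 0 0 = 0) ?eqxx //; apply: vec3P; rewrite ?comb0 ?comb1 ?comb2 !mxE; ring.
exists (fun a => tP (X a)), (fun a => tP (Y a)),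
  (fun c' => - (co1 U V W (Z c') * e / co2 U V W (Z c') + g) / d).
split.
- move=> a a' hs; apply: hXi.
  case: (pX a) => h1 ->; case: (pX a') => h2 ->; rewrite /= in hs; rewrite hs.
  exact: prop_comb.
- move=> a a' hs; apply: hYi.
  case: (pY a) => h1 ->; case: (pY a') => h2 ->; rewrite /= in hs; rewrite hs.
  exact: prop_comb.
- move=> c1' c2' /= hs; apply: hZi.
  have h1 := hr2 c1'; have h2 := hr2 c2'.
  move: (hZr c1') (hZr c2') hs h1 h2.
  set r1 := co1 U V W (Z c1'); set r2 := co2 U V W (Z c1').
  set q1 := co1 U V W (Z c2'); set q2 := co2 U V W (Z c2').
  move=> -> -> hs h1 h2.
  exists (r2 / q2); split.
    by rewrite mulf_neq0 ?invr_eq0.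
  rewrite -comb_scale; congr comb.
  + apply: (@mulIf _ (- e / (d * r2))).
      by apply: mulf_neq0; [rewrite oppr_eq0 | rewrite invr_eq0; apply: mulf_neq0].
    transitivity (- (r1 * e / r2 + g) / d + g / d); first by field; fs.
    rewrite hs; field; fs.
  + field; fs.
  + by rewrite mulr0.
move=> a b' c' ht /=.
have E := rel a b' c' ht.
have hr := hr2 c'.
set t1 := tP (X a) in E *; set t2 := tP (Y b') in E *.
set r1 := co1 U V W (Z c') in E *; set r2 := co2 U V W (Z c') in E hr *.
transitivity ((r1 * e + r2 * (d * (t1 + t2) + g)) / (r2 * d) - (r1 * e / r2 + g) / d).
  by field; fs.
by rewrite E; field; fs.
Qed.

End Tangent.

Lemma comb_add (E1 E2 E3 : 'rV[K]_3) x y z x' y' z' :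
  comb E1 E2 E3 x y z + comb E1 E2 E3 x' y' z' = comb E1 E2 E3 (x + x') (y + y') (z + z').
Proof. by apply: vec3P; rewrite ?mxE ?comb0 ?comb1 ?comb2 ?mxE; ring. Qed.

Lemma comb001 (E1 E2 E3 : 'rV[K]_3) : comb E1 E2 E3 0 0 1 = E3.
Proof. by apply: vec3P; rewrite ?comb0 ?comb1 ?comb2; ring. Qed.

Lemma cross_cross (u v w : 'rV[K]_3) : forall i, (cross (cross u v) w) 0 i = dot w u * v 0 i - dot w v * u 0 i.
Proof.
move=> i; rewrite !dotE /cross.
by case: (ord3E i) => [->|[->|->]]; rewrite !mxE /=; ring.
Qed.

Lemma dot_scale (c : K) (u v : 'rV[K]_3) : dot (c *: u) v = c * dot u v.
Proof. by rewrite !dotE !mxE; ring. Qed.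

Hypothesis (hfac : forall a h d : K, exists al be ga de : K, forall x y,
     a * x ^+ 2 + h * x * y + d * y ^+ 2 = (al * x + be * y) * (ga * x + de * y)).
Hypotheses (hl : l != 0) (z0 z1 : 'I_n) (hz : z0 != z1).

Lemma geo_main :
  (exists s1 s2 s3 : 'I_n -> K,
    [/\ injective s1, injective s2, injective s3, (forall a, s1 a != 0 /\ s2 a != 0) &
     forall a b' c', triple (X a) (Y b') (Z c') = 0 -> s1 a * s2 b' = s3 c']) \/
  (exists s1 s2 s3 : 'I_n -> K,
    [/\ injective s1, injective s2, injective s3 &
     forall a b' c', triple (X a) (Y b') (Z c') = 0 -> s1 a + s2 b' = s3 c']).
Proof.
have [W hlW] : exists W, dot l W != 0.
  case: (vec3_neq0 hl) => [h|[h|h]].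
  - by exists (mk3 1 0 0); rewrite dotE ?mk3E0 ?mk3E1 ?mk3E2 mulr1 !mulr0 !addr0.
  - by exists (mk3 0 1 0); rewrite dotE ?mk3E0 ?mk3E1 ?mk3E2 mulr1 !mulr0 add0r addr0.
  - by exists (mk3 0 0 1); rewrite dotE ?mk3E0 ?mk3E1 ?mk3E2 mulr1 !mulr0 !add0r.
set Z0 := Z z0; set Z1 := Z z1.
have hN : cross Z0 Z1 != 0.
  apply: not_prop_cross; rewrite ?hZ0 //.
  by move=> /hZi h; move: hz; rewrite h eqxx.
have [mu [hmu hmuE]] : proportional (cross Z0 Z1) l.
  apply: cross0_prop => //; apply: vec3_0; rewrite cross_cross /Z0 /Z1 !hZl; ring.
have hD0 : triple Z0 Z1 W != 0 by rewrite /triple hmuE dot_scale mulf_neq0.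
set e0 := Bq A Z0 W; set g0 := Bq A Z1 W; set k0 := qform A W.
have [al [be [ga [de hF]]]] := hfac (qform A Z0) (Bq A Z0 Z1) (qform A Z1).
have hQ0 x y z : qform A (comb Z0 Z1 W x y z) = (al * x + be * y) * (ga * x + de * y) + z * (x * e0 + y * g0 + z * k0).
  by rewrite qform_comb -hF /e0 /g0 /k0; ring.
have hred : (forall x y, (al * x + be * y) * (ga * x + de * y) = 0) -> False.
  move=> H; apply: (@red_basis _ Z0 Z1 W hD0 A 0 0 1 e0 g0 k0) hA => x y z.
  by rewrite hQ0 H; ring.
have hlc x y : dot l (comb Z0 Z1 W x y 0) = 0.
  by rewrite dot_comb /Z0 /Z1 !hZl; ring.
case: (eqVneq (al * de - be * ga) 0) => hdet; last first.
  left; apply: (@sec_main (comb Z0 Z1 W be (- al) 0) (comb Z0 Z1 W de (- ga) 0) W) => //.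
  - rewrite -{3}(comb001 Z0 Z1 W) triple_comb /det3.
    apply: mulf_neq0 => //; apply: contra hdet => /eqP h; rewrite -h; apply/eqP; ring.
  - by rewrite hQ0; ring.
  - by rewrite hQ0; ring.
have hab : (al != 0) || (be != 0).
  case: (eqVneq al 0) => [ha|//]; case: (eqVneq be 0) => [hb|]; last by rewrite orbT.
  by exfalso; apply: hred => x y; rewrite ha hb; ring.
pose xV : K := if al != 0 then 1 else 0.
pose yV : K := if al != 0 then 0 else 1.
have hm : al * xV + be * yV != 0.
  by rewrite /xV /yV; case: (eqVneq al 0) hab => /= h; rewrite ?h => hab'; rewrite ?mulr1 ?mulr0 ?addr0 ?add0r.
have hm' : ga * xV + de * yV != 0.
  rewrite /xV /yV; case: (eqVneq al 0) => h /=.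
  - rewrite mulr0 mulr1 add0r; apply/negP => /eqP hd0.
    have hb : be != 0 by move: hab; rewrite h eqxx.
    have hg : ga = 0.
      by move/eqP: hdet; rewrite h hd0 mul0r sub0r oppr_eq0 mulf_eq0 (negbTE hb) => /eqP.
    by apply: hred => x y; rewrite hg hd0; ring.
  - rewrite mulr0 mulr1 addr0; apply/negP => /eqP hg.
    have hd : de = 0.
      by move/eqP: hdet; rewrite hg mulr0 subr0 mulf_eq0 (negbTE h) => /eqP.
    by apply: hred => x y; rewrite hg hd; ring.
right; apply: (@tan_main (comb Z0 Z1 W be (- al) 0) (comb Z0 Z1 W xV yV 0) W) => //.
- rewrite -{3}(comb001 Z0 Z1 W) triple_comb /det3.
  apply: mulf_neq0 => //; apply: contra hm => /eqP h; rewrite -h; apply/eqP; ring.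
- by rewrite hQ0; ring.
- rewrite /Bq comb_add !hQ0.
  transitivity ((al * xV + be * yV) * (ga * be - de * al)); first by ring.
  rewrite (_ : ga * be - de * al = 0) ?mulr0 //.
  by transitivity (- (al * de - be * ga)); [ring | rewrite hdet oppr0].
- by rewrite hQ0 mul0r addr0; apply: mulf_neq0.
Qed.
End Core.

Lemma sub0eqC (K : zmodType) (x y : K) : x - y = 0 -> x = y.
Proof. by move/eqP; rewrite subr_eq0 => /eqP. Qed.

Section Comb.
Variables (K : fieldType) (n : nat).

Lemma prod_trick (s : 'I_n -> K) (r : K) : injective s -> (forall b, s b != 0) -> r != 0 ->
  (forall b, exists b', s b' = s b * r) -> r ^+ n = 1.
Proof.
move=> si snz rnz H.
have H' b : {b' | s b' == s b * r} by apply: sigW; have [b' hb] := H b; exists b'; apply/eqP.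
pose sg b := sval (H' b).
have hsg b : s (sg b) = s b * r by apply/eqP; exact: (svalP (H' b)).
have sgi : injective sg.
  by move=> b1 b2 h; apply: si; apply: (mulIf rnz); rewrite -!hsg h.
have P0 : \prod_(b < n) s b != 0 by apply/prodf_neq0 => b _.
apply: (mulIf P0); rewrite mul1r.
rewrite [in RHS](reindex_inj sgi) /=.
under [in RHS]eq_bigr => b _ do rewrite hsg.
by rewrite big_split /= prodr_const card_ord mulrC.
Qed.


Lemma mult_real (R : 'I_n -> 'I_n -> 'I_n -> Prop) (s1 s2 s3 : 'I_n -> K) (hn : (0 < n)%N) :
  injective s1 -> injective s2 -> injective s3 -> (forall a, s1 a != 0 /\ s2 a != 0) ->
  (forall a b c, R a b c -> s1 a * s2 b = s3 c) ->
  (forall a b, exists c, R a b c) -> (forall b c, exists a, R a b c) -> (forall a c, exists b, R a b c) ->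
  exists fX fY fZ : 'I_n -> 'I_n, [/\ injective fX, injective fY, injective fZ &
    forall u v w, R (fX u) (fY v) (fZ w) <-> (n %| u + v + w)%N].
Proof.
move=> i1 i2 i3 nz rel N2 N3 N4.
pose a0 := Ordinal hn.
have nz1 a : s1 a != 0 by case: (nz a).
have nz2 a : s2 a != 0 by case: (nz a).
have hrX a a' : (s1 a / s1 a') ^+ n = 1.
  apply: (prod_trick i2 nz2); first by rewrite mulf_neq0 ?invr_eq0.
  move=> b; have [c hc] := N2 a b; have [b' hb'] := N4 a' c; exists b'.
  apply: (@mulfI _ (s1 a')) => //; rewrite (rel _ _ _ hb') -(rel _ _ _ hc); field; exact: nz1.
have hrY b b' : (s2 b / s2 b') ^+ n = 1.
  apply: (prod_trick i1 nz1); first by rewrite mulf_neq0 ?invr_eq0.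
  move=> a; have [c hc] := N2 a b; have [a' ha'] := N3 b' c; exists a'.
  apply: (@mulIf _ (s2 b')) => //; rewrite (rel _ _ _ ha') -(rel _ _ _ hc); field; exact: nz2.
have hrZ c : (s3 c / (s1 a0 * s2 a0)) ^+ n = 1.
  have [a ha] := N3 a0 c; rewrite -(rel _ _ _ ha) -(hrX a a0); congr (_ ^+ _); field.
  by rewrite nz1 nz2.
have /hasP [w _ hw] : has n.-primitive_root [seq s1 a / s1 a0 | a <- enum 'I_n].
  apply: has_prim_root => //.
  - by apply/allP => x /mapP [a _ ->]; rewrite unity_rootE hrX.
  - rewrite map_inj_uniq ?enum_uniq // => a a' h; apply: i1.
    by apply: (@mulIf _ (s1 a0)^-1); rewrite ?invr_eq0.
  - by rewrite size_map size_enum_ord.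
pose iX a := sval (prim_rootP hw (hrX a a0)).
pose iY a := sval (prim_rootP hw (hrY a a0)).
pose iZ a := sval (prim_rootP hw (hrZ a)).
have eX a : s1 a = s1 a0 * w ^+ iX a.
  by rewrite -(svalP (prim_rootP hw (hrX a a0))); field.
have eY a : s2 a = s2 a0 * w ^+ iY a.
  by rewrite -(svalP (prim_rootP hw (hrY a a0))); field.
have eZ a : s3 a = s1 a0 * s2 a0 * w ^+ iZ a.
  by rewrite -(svalP (prim_rootP hw (hrZ a))); field; rewrite nz1 nz2.
have w0 : w != 0.
  by apply/negP => /eqP w0; move: (prim_expr_order hw); rewrite w0 expr0n gtn_eqF //= => /eqP; rewrite eq_sym oner_eq0.
have iXi : injective iX by move=> a a' h; apply: i1; rewrite eX (eX a') h.
have iYi : injective iY by move=> a a' h; apply: i2; rewrite eY (eY a') h.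
have iZi : injective iZ by move=> a a' h; apply: i3; rewrite eZ (eZ a') h.
pose negw (u : 'I_n) : 'I_n := Ordinal (ltn_pmod (n - u) hn).
have hneg (u : 'I_n) : w ^+ negw u * w ^+ u = 1.
  rewrite /negw /= (prim_expr_mod hw) -exprD subnK ?(ltnW (ltn_ord u)) //.
  exact: prim_expr_order hw.
have negwi : injective negw.
  move=> u u' h.
  have : (u == u' %[mod n])%N.
    rewrite -(eq_prim_root_expr hw); apply/eqP.
    apply: (@mulfI _ (w ^+ negw u)); first by rewrite expf_neq0.
    by rewrite hneg h hneg.
  by rewrite !modn_small // => /eqP h'; apply: val_inj.
exists (invF iXi), (invF iYi), (fun u => invF iZi (negw u)); split.
- exact: can_inj (f_invF iXi).
- exact: can_inj (f_invF iYi).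
- by move=> u u' /(can_inj (f_invF iZi)) /negwi.
have fX u : s1 (invF iXi u) = s1 a0 * w ^+ u by rewrite eX f_invF.
have fY u : s2 (invF iYi u) = s2 a0 * w ^+ u by rewrite eY f_invF.
have fZ u : s3 (invF iZi (negw u)) = s1 a0 * s2 a0 * w ^+ negw u by rewrite eZ f_invF.
move=> u v x; rewrite (prim_order_dvd hw) !exprD; split.
  move=> /rel; rewrite fX fY fZ => h.
  have h' : w ^+ u * w ^+ v = w ^+ negw x.
    apply: (@mulfI _ (s1 a0 * s2 a0)); first by rewrite mulf_neq0.
    by rewrite -h; ring.
  by rewrite h' hneg.
move=> /eqP h.
have [c hc] := N2 (invF iXi u) (invF iYi v).
suff -> : invF iZi (negw x) = c by [].
apply: i3; rewrite fZ -(rel _ _ _ hc) fX fY.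
have h' : w ^+ u * w ^+ v = w ^+ negw x.
  apply: (@mulIf _ (w ^+ x)); first by rewrite expf_neq0.
  by rewrite h hneg.
by rewrite -h'; ring.
Qed.


Lemma sum_trick (s : 'I_n -> K) (r : K) : injective s -> n%:R != 0 :> K ->
  (forall b, exists b', s b' = s b + r) -> r = 0.
Proof.
move=> si hn H.
have H' b : {b' | s b' == s b + r} by apply: sigW; have [b' hb] := H b; exists b'; apply/eqP.
pose sg b := sval (H' b).
have hsg b : s (sg b) = s b + r by apply/eqP; exact: (svalP (H' b)).
have sgi : injective sg.
  by move=> b1 b2 h; apply: si; apply: (addIr r); rewrite -!hsg h.
have E : \sum_(b < n) s b = \sum_(b < n) s b + n%:R * r.
  rewrite {1}(reindex_inj sgi) /=.
  under eq_bigr => b _ do rewrite hsg.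
  by rewrite big_split /= sumr_const card_ord mulr_natl.
have : n%:R * r = 0 by apply: (addrI (\sum_(b < n) s b)); rewrite addr0 -E.
by move/eqP; rewrite mulf_eq0 (negbTE hn) /= => /eqP.
Qed.

Lemma add_contra (R : 'I_n -> 'I_n -> 'I_n -> Prop) (s1 s2 s3 : 'I_n -> K) (hn : (1 < n)%N) :
  n%:R != 0 :> K -> injective s1 -> injective s2 ->
  (forall a b c, R a b c -> s1 a + s2 b = s3 c) ->
  (forall a b, exists c, R a b c) -> (forall a c, exists b, R a b c) -> False.
Proof.
move=> hnK i1 i2 rel N2 N4.
pose a0 : 'I_n := Ordinal (ltnW hn).
pose a1 : 'I_n := Ordinal hn.
have : s1 a0 - s1 a1 = 0.
  apply: (sum_trick i2 hnK) => b.
  have [c hc] := N2 a0 b; have [b' hb'] := N4 a1 c; exists b'.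
  apply: (@addrI _ (s1 a1)); rewrite (rel _ _ _ hb') -(rel _ _ _ hc); ring.
by move/sub0eqC/i1/(congr1 val).
Qed.

End Comb.

Lemma factor2 (K : closedFieldType) (a h d : K) : exists al be ga de : K, forall x y,
     a * x ^+ 2 + h * x * y + d * y ^+ 2 = (al * x + be * y) * (ga * x + de * y).
Proof.
case: (eqVneq a 0) => ha.
  by exists 0, 1, h, d => x y; rewrite ha; ring.
have [r hr] := @solve_monicpoly K 2 (nth 0 [:: - d / a; - h / a]) isT.
rewrite !big_ord_recr big_ord0 /= add0r expr0 mulr1 expr1 in hr.
exists a, (- a * r), 1, (h / a + r) => x y.
have hd : d = - a * r ^+ 2 - h * r.
  by rewrite hr; field.
by rewrite hd; field.
Qed.

Lemma mod_neg (n x c : nat) : (c < n)%N -> ((x %% n)%N = c <-> (n %| x + (n - c) %% n)%N).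
Proof.
move=> hc; rewrite /dvdn modnDmr; split => [h|/eqP h].
  by rewrite -modnDml h subnKC ?(ltnW hc) // modnn.
rewrite -modnDr (_ : (x + n = x + (n - c) + c)%N); last by rewrite -addnA subnK // ltnW.
by rewrite -modnDml h add0n modn_small.
Qed.

Section Net.
Variables (K : fieldType) (n : nat) (L : 'I_3 -> 'I_n -> 'rV[K]_3).
Hypothesis hnet : dual3net L.

Lemma net_nz t a : L t a != 0.
Proof. by case: hnet. Qed.

Lemma net_cross t1 t2 a b : (t1, a) != (t2, b) -> cross (L t1 a) (L t2 b) != 0.
Proof.
case: hnet => hnz hd _ h; apply: not_prop_cross => //; exact: hd.
Qed.

Lemma net_inj t a a' : proportional (L t a) (L t a') -> a = a'.
Proof.
case: hnet => _ hd _ h; apply/eqP; apply/negP => /negP hne.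
by apply: (hd t t a a') => //; rewrite xpair_eqE eqxx /= hne.
Qed.

Lemma net_ex t1 t2 t3 : t1 != t2 -> forall a b, exists c, collinear (L t1 a) (L t2 b) (L t3 c).
Proof.
move=> ht a b; case: hnet => hnz hd hl.
have hc : cross (L t1 a) (L t2 b) != 0 by apply: net_cross; rewrite xpair_eqE negb_and ht.
have [c [hc1 _]] := hl _ hc t1 t2 ht (ex_intro _ a (cross_dot1 _ _)) (ex_intro _ b (cross_dot2 _ _)) t3.
exists c, (cross (L t1 a) (L t2 b)); split => //; split; first exact: cross_dot1.
by split; [exact: cross_dot2|].
Qed.

Lemma net_off (l : 'rV[K]_3) t k (z0 z1 : 'I_n) : l != 0 -> t != k -> z0 != z1 ->
  (forall c, incident l (L k c)) -> forall a, dot l (L t a) != 0.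
Proof.
move=> hl htk hz hZ a; apply/negP => /eqP h.
case: hnet => _ _ hlines.
have [c [_ hu]] := hlines l hl t k htk (ex_intro _ a h) (ex_intro _ z0 (hZ z0)) k.
by move: hz; rewrite -(hu z0 (hZ z0)) -(hu z1 (hZ z1)) eqxx.
Qed.

End Net.

Unset Implicit Arguments.
Theorem proposition4p11 (K : closedFieldType) (n : nat)
    (L : 'I_3 -> 'I_n -> 'rV[K]_3)
    (hchar : [pchar K] =i pred0 \/ exists p : nat, p \in [pchar K] /\ (5 <= p)%N)
    (hnp : forall p : nat, p \in [pchar K] -> (n < p)%N)
    (hnet : dual3net L)
    (hcl : conic_line_type L) :
  exists (gT : finGroupType) (G : {group gT}),
    [/\ cyclic G, #|G| = n & realizes L G].
Proof.
move: L hnp hnet hcl; case: n => [|m] L hnp hnet hcl; first by case: hcl.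
set n := m.+1 in L hnp hnet hcl *.
case: hcl => hn4 [i [j [k [hij hjk hik [[A [hirr hXc hYc]] [l [hl hZl]]]]]]].
have hn2 : (1 < n)%N by apply: leq_trans hn4.
pose z0 : 'I_n := Ordinal (ltnW hn2).
pose z1 : 'I_n := Ordinal hn2.
have hz : z0 != z1 by [].
have hki : k != i by rewrite eq_sym.
have hkj : k != j by rewrite eq_sym.
have hji : j != i by rewrite eq_sym.
pose R a b c := triple (L i a) (L j b) (L k c) = 0.
have N2 a b : exists c, R a b c.
  by have [c hc] := net_ex hnet k hij a b; exists c; apply: col_triple.
have N3 b c : exists a, R a b c.
  have [a ha] := net_ex hnet i hjk b c; exists a.
  by rewrite /R triple_cyc; apply: col_triple.
have N4 a c : exists b, R a b c.
  have [b hb] := net_ex hnet j hik a c; exists b.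
  by apply: col_triple; apply: col23.
have hXY a b : ~ proportional (L i a) (L j b).
  case: hnet => _ hd _; apply: hd; apply/negP; case/eqP => hh _; by move: hij; rewrite hh eqxx.
have hcrXY a b : cross (L i a) (L j b) != 0 by apply: not_prop_cross; rewrite ?net_nz.
have hcolR a b c : collinear (L i a) (L j b) (L k c) <-> R a b c by exact: collinear_triple.
have [[s1 [s2 [s3 [i1 i2 i3 nz rel]]]]|[s1 [s2 [s3 [i1 i2 i3 rel]]]]] :=
  @geo_main K n A l (L i) (L j) (L k) (irr_noFact hirr) hXc hYc hZl
    (net_off hnet (z0 := z0) (z1 := z1) hl hik hz hZl)
    (net_off hnet (z0 := z0) (z1 := z1) hl hjk hz hZl)
    (net_nz hnet k) (net_inj hnet (t := i)) (net_inj hnet (t := j)) (net_inj hnet (t := k))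
    hXY
    N3 z0 (@factor2 K) hl z0 z1 hz; last first.
  exfalso; apply: (add_contra (R := R) hn2 _ i1 i2 rel N2 N4).
  apply/negP => /eqP h0.
  have [p hp] := natf0_pchar (ltnW hn2) (introT eqP h0).
  have : (p %| n)%N by rewrite (dvdn_pcharf hp) h0.
  by move/(dvdn_leq (ltnW hn2)); rewrite leqNgt hnp.
have [fX [fY [fZ [iX iY iZ hsym]]]] := mult_real (R := R) (ltnW hn2) i1 i2 i3 nz rel N2 N3 N4.
have V1 u v w : collinear (L i (fX u)) (L j (fY v)) (L k (fZ w)) <-> (n %| u + v + w)%N.
  by rewrite hcolR hsym.
have V2 u v w : collinear (L j (fY v)) (L i (fX u)) (L k (fZ w)) <-> (n %| v + u + w)%N.
  by rewrite [(v + u)%N]addnC -V1; split; apply: col12.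
have V3 u v w : collinear (L i (fX u)) (L k (fZ w)) (L j (fY v)) <-> (n %| u + w + v)%N.
  by rewrite -addnA [(w + v)%N]addnC addnA -V1; split; apply: col23.
have V4 u v w : collinear (L j (fY v)) (L k (fZ w)) (L i (fX u)) <-> (n %| v + w + u)%N.
  rewrite addnC addnA -V1; split => h.
    by apply: col12; apply: col23.
  by apply: col23; apply: col12.
have V5 u v w : collinear (L k (fZ w)) (L i (fX u)) (L j (fY v)) <-> (n %| w + u + v)%N.
  rewrite -addnA addnC -V1; split => h.
    by apply: col23; apply: col12.
  by apply: col12; apply: col23.
have V6 u v w : collinear (L k (fZ w)) (L j (fY v)) (L i (fX u)) <-> (n %| w + v + u)%N.
  rewrite addnC [(w + v)%N]addnC addnA -V1; split => h.
    by apply: col12; apply: col23; apply: col12.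
  by apply: col12; apply: col23; apply: col12.
pose F (t : 'I_3) : 'I_n -> 'I_n := if t == i then fX else if t == j then fY else fZ.
have hFi t : injective (F t) by rewrite /F; case: ifP => _ //; case: ifP.
have hF u v w : collinear (L c0 (F c0 u)) (L c1 (F c1 v)) (L c2 (F c2 w)) <-> (n %| u + v + w)%N.
  rewrite /F; move: hij hjk hik V1 V2 V3 V4 V5 V6.
  case: (ord3E i) => [->|[->|->]]; case: (ord3E j) => [->|[->|->]]; case: (ord3E k) => [->|[->|->]] //= _ _ _ V1 V2 V3 V4 V5 V6;
  first [exact: V1 | exact: V2 | exact: V3 | exact: V4 | exact: V5 | exact: V6].
pose negw (c : 'I_n) : 'I_n := Ordinal (ltn_pmod (n - c) (ltn0Sn m)).
have negwi : injective negw.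
  move=> c c' h.
  have h1 : (n %| c' + (n - c') %% n)%N by rewrite -mod_neg // modn_small.
  have : (c' %% n)%N = c.
    have hv : ((n - c) %% n = (n - c') %% n)%N := congr1 val h.
    by rewrite mod_neg // hv.
  by rewrite modn_small // => h2; apply: val_inj.
exists 'I_n, [set: 'I_n]%G; split.
- by apply/cyclicP; exists Zp1; exact: Zp_cycle.
- by rewrite cardsT card_ord.
exists (F c0), (F c1), (fun c => F c2 (negw c)); split.
- by move=> a b _ _; apply: hFi.
- by move=> a b _ _; apply: hFi.
- by move=> a b _ _ /hFi /negwi.
- move=> x; split.
  + by exists (invF (hFi c0) x); rewrite ?in_setT ?f_invF.
  + by exists (invF (hFi c1) x); rewrite ?in_setT ?f_invF.
  + by exists (invF negwi (invF (hFi c2) x)); rewrite ?in_setT ?f_invF.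
move=> a b _ _ c _; rewrite hF /= -mod_neg //; split.
  by move=> <-.
by move=> h; apply: val_inj.
Qed.
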